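(* Let $\mathbb{C}=(\mathbf{C},0,\mathbf{D},\mathcal{R})$ be a reactive system with redex IPOs and let $O$ be a set of contextual barbs. If the set of all labels (all arrows of $\mathbf{C}$) is $O$-capturing and each label is stable under barbed saturated bisimilarity $\sim^{BS}$, then IPO-bisimilarity $\sim^{I}$ coincides with $\sim^{BS}$.
   Context: A reactive system consists of a category $\mathbf{C}$, a distinguished object $0$, a composition-reflecting subcategory $\mathbf{D}$ of reactive contexts, and a set $\mathcal{R}\subseteq\bigcup_I\mathbf{C}(0,I)\times\mathbf{C}(0,I)$ of reduction rules. Terms are arrows with domain $0$; $C[P]$ denotes $C[-]\circ P$. Reduction: $P\rightsquigarrow Q$ iff $P=d\circ l$, $Q=d\circ r$ for some $\langle l,r\rangle\in\mathcal{R}$, $d\in\mathbf{D}$. For a commuting square $c_1\circ a_1=c_2\circ a_2$ with $a_1:K\to I_2$, $a_2:K\to I_3$, $c_1:I_2\to I_4$, $c_2:I_3\to I_4$, a candidate is $\langle I_5,e,f,g\rangle$ with $e\circ a_1=f\circ a_2$, $g\circ e=c_1$, $g\circ f=c_2$; an RPO is a candidate through which every other candidate $\langle I_6,e',f',g'\rangle$ factors via a unique $h:I_5\to I_6$ ($h\circ e=e'$, $h\circ f=f'$, $g'\circ h=g$); the square is an IPO if $\langle I_4,c_1,c_2,\mathrm{id}\rangle$ is an RPO. A redex square is a commuting square $C[-]\circ P=d\circ l$ with $\langle l,r\rangle\in\mathcal{R}$, $d\in\mathbf{D}$; the system has redex IPOs if every redex square has a candidate $\langle I_5,e,f,g\rangle$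 for which the square $e\circ P=f\circ l$ is an IPO. IPO transitions: $P\xrightarrow{C[-]}_I d\circ r$ if $d\in\mathbf{D}$, $\langle l,r\rangle\in\mathcal{R}$ and $C[-]\circ P=d\circ l$ is an IPO. IPO-bisimilarity $\sim^I$ is ordinary strong bisimilarity on this labelled transition system. Barbs are predicates on terms; $P\downarrow_o$ means $P$ satisfies $o\in O$. Barbed saturated bisimilarity $\sim^{BS}$ is the largest symmetric relation $\mathcal{R}'$ such that if $P\,\mathcal{R}'\,Q$ then for all arrows $C[-]$ composable with $P$: $C[P]\downarrow_o$ implies $C[Q]\downarrow_o$, and $C[P]\rightsquigarrow P'$ implies $C[Q]\rightsquigarrow Q'$ with $P'\,\mathcal{R}'\,Q'$. A barb $o$ is contextual if whenever ($P\downarrow_o$ implies $Q\downarrow_o$) then for all $C[-]$, $C[P]\downarrow_o$ implies $C[Q]\downarrow_o$. A set of labels $L$ is $O$-capturing if for each $o\in O$ there is $C[-]\in L$ such that for every term $P$, $P\downarrow_o$ iff $P\xrightarrow{C[-]}_I P'$ for some $P'$. A label $C[-]$ is stable under a relation $\mathcal{R}'$ if whenever $P\,\mathcal{R}'\,Q$ and $P\xrightarrow{C[-]}_I P'$ there is $Q'$ with $Q\xrightarrow{C[-]}_I Q'$ and $P'\,\mathcal{R}'\,Q'$. *)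

(* Defs.v *)
Record Category := {
  Ob : Type;
  Hom : Ob -> Ob -> Type;
  comp : forall (A B C : Ob), Hom B C -> Hom A B -> Hom A C;
  idc : forall A : Ob, Hom A A;
  comp_assoc : forall A B C D (h : Hom C D) (g : Hom B C) (f : Hom A B),
      comp A B D (comp B C D h g) f = comp A C D h (comp A B C g f);
  comp_id_l : forall A B (f : Hom A B), comp A B B (idc B) f = f;
  comp_id_r : forall A B (f : Hom A B), comp A A B f (idc A) = f
}.

Arguments Hom {c} _ _.
Arguments comp {c A B C} _ _.
Arguments idc {c} A.

Section Pushouts.
Variable Cat : Category.

Definition is_candidate {K I2 I3 I4 : Ob Cat}
  (a1 : Hom K I2) (a2 : Hom K I3) (c1 : Hom I2 I4) (c2 : Hom I3 I4)
  (I5 : Ob Cat) (e : Hom I2 I5) (f : Hom I3 I5) (g : Hom I5 I4) : Prop :=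
  comp e a1 = comp f a2 /\ comp g e = c1 /\ comp g f = c2.

Definition is_RPO {K I2 I3 I4 : Ob Cat}
  (a1 : Hom K I2) (a2 : Hom K I3) (c1 : Hom I2 I4) (c2 : Hom I3 I4)
  (I5 : Ob Cat) (e : Hom I2 I5) (f : Hom I3 I5) (g : Hom I5 I4) : Prop :=
  is_candidate a1 a2 c1 c2 I5 e f g /\
  forall (I6 : Ob Cat) (e' : Hom I2 I6) (f' : Hom I3 I6) (g' : Hom I6 I4),
    is_candidate a1 a2 c1 c2 I6 e' f' g' ->
    exists h : Hom I5 I6,
      (comp h e = e' /\ comp h f = f' /\ comp g' h = g) /\
      forall h' : Hom I5 I6,
        (comp h' e = e' /\ comp h' f = f' /\ comp g' h' = g) -> h' = h.

Definition is_IPO {K I2 I3 I4 : Ob Cat}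
  (a1 : Hom K I2) (a2 : Hom K I3) (c1 : Hom I2 I4) (c2 : Hom I3 I4) : Prop :=
  comp c1 a1 = comp c2 a2 /\ is_RPO a1 a2 c1 c2 I4 c1 c2 (idc I4).

End Pushouts.

Arguments is_candidate {Cat K I2 I3 I4} a1 a2 c1 c2 I5 e f g.
Arguments is_RPO {Cat K I2 I3 I4} a1 a2 c1 c2 I5 e f g.
Arguments is_IPO {Cat K I2 I3 I4} a1 a2 c1 c2.

Record ReactiveSystem := {
  rs_cat : Category;
  rs_zero : Ob rs_cat;
  (* the subcategory D of reactive contexts, as a predicate on arrows *)
  rs_D : forall (I J : Ob rs_cat), Hom I J -> Prop;
  rs_D_comp : forall I J K (d : Hom J K) (d' : Hom I J),
      rs_D J K d -> rs_D I J d' -> rs_D I K (comp d d');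
  rs_D_reflect : forall I J K (d : Hom J K) (d' : Hom I J),
      rs_D I K (comp d d') -> rs_D J K d /\ rs_D I J d';
  rs_rules : forall I : Ob rs_cat, Hom rs_zero I -> Hom rs_zero I -> Prop
}.

Arguments rs_D {r I J} _.
Arguments rs_rules {r I} _ _.

Section Reactive.
Variable RS : ReactiveSystem.

Notation Obj := (Ob (rs_cat RS)).
Notation Arr := (@Hom (rs_cat RS)).
Notation z := (rs_zero RS).

(* Terms are arrows with domain 0.  Relations on terms relate terms of the
   same interface (codomain), so that the same contexts apply to both. *)
Definition term_rel := forall I : Obj, Arr z I -> Arr z I -> Prop.

Definition reduces {J : Obj} (P Q : Arr z J) : Prop :=
  exists (K : Obj) (l r : Arr z K) (d : Arr K J),
    rs_rules l r /\ rs_D d /\ P = comp d l /\ Q = comp d r.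

Definition has_redex_IPOs : Prop :=
  forall (I2 I3 I4 : Obj) (P : Arr z I2) (C : Arr I2 I4)
         (l r : Arr z I3) (d : Arr I3 I4),
    rs_rules l r -> rs_D d -> comp C P = comp d l ->
    exists (I5 : Obj) (e : Arr I2 I5) (f : Arr I3 I5) (g : Arr I5 I4),
      is_candidate P l C d I5 e f g /\ is_IPO P l e f.

Definition ipo_trans {I J : Obj} (P : Arr z I) (C : Arr I J) (P' : Arr z J)
  : Prop :=
  exists (K : Obj) (l r : Arr z K) (d : Arr K J),
    rs_D d /\ rs_rules l r /\ P' = comp d r /\ is_IPO P l C d.

(* The same transition relation, for a term P and a label C that need not be
   composable a priori (then there is no transition). *)
Definition ipo_trans_any {K I J : Obj} (P : Arr z K) (C : Arr I J)
  (P' : Arr z J) : Prop :=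
  exists H : K = I, ipo_trans (eq_rect K (fun X => Arr z X) P I H) C P'.

Definition ipo_bisimulation (R : term_rel) : Prop :=
  forall (I : Obj) (P Q : Arr z I), R I P Q ->
    (forall (J : Obj) (C : Arr I J) (P' : Arr z J), ipo_trans P C P' ->
       exists Q', ipo_trans Q C Q' /\ R J P' Q') /\
    (forall (J : Obj) (C : Arr I J) (Q' : Arr z J), ipo_trans Q C Q' ->
       exists P', ipo_trans P C P' /\ R J P' Q').

Definition ipo_bisim : term_rel :=
  fun I P Q => exists R : term_rel, ipo_bisimulation R /\ R I P Q.

Section Barbs.
Variable O : Type.
Variable barb : O -> forall I : Obj, Arr z I -> Prop.

Definition symmetric_rel (R : term_rel) : Prop :=
  forall I P Q, R I P Q -> R I Q P.

Definition bs_bisimulation (R : term_rel) : Prop :=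
  symmetric_rel R /\
  forall (I : Obj) (P Q : Arr z I), R I P Q ->
    forall (J : Obj) (C : Arr I J),
      (forall o : O, barb o J (comp C P) -> barb o J (comp C Q)) /\
      (forall P' : Arr z J, reduces (comp C P) P' ->
         exists Q', reduces (comp C Q) Q' /\ R J P' Q').

Definition bs_bisim : term_rel :=
  fun I P Q => exists R : term_rel, bs_bisimulation R /\ R I P Q.

Definition contextual_barb (o : O) : Prop :=
  forall (I : Obj) (P Q : Arr z I),
    (barb o I P -> barb o I Q) ->
    forall (J : Obj) (C : Arr I J), barb o J (comp C P) -> barb o J (comp C Q).

Definition all_labels_O_capturing : Prop :=
  forall o : O, exists (I J : Obj) (C : Arr I J),
    forall (K : Obj) (P : Arr z K),
      barb o K P <-> exists P' : Arr z J, ipo_trans_any P C P'.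

End Barbs.

Definition label_stable {I J : Obj} (C : Arr I J) (R : term_rel) : Prop :=
  forall (P Q : Arr z I) (P' : Arr z J), R I P Q -> ipo_trans P C P' ->
    exists Q', ipo_trans Q C Q' /\ R J P' Q'.

End Reactive.

Arguments reduces {RS J} P Q.
Arguments ipo_trans {RS I J} P C P'.
Arguments ipo_trans_any {RS K I J} P C P'.

(* Main.v *)
Require Import Defs.

Section S.
Variable RS : ReactiveSystem.
Variable O : Type.
Variable barb : O -> forall I : Ob (rs_cat RS), Hom (rs_zero RS) I -> Prop.

Lemma ipo_bisim_sym : forall I P Q, ipo_bisim RS I P Q -> ipo_bisim RS I Q P.
Proof.
  intros I P Q [R [HR HPQ]].
  exists (fun I P Q => R I Q P). split; [|exact HPQ].
  intros I0 P0 Q0 H. destruct (HR _ _ _ H) as [H1 H2]. split; intros.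
  - destruct (H2 _ _ _ H0) as [x [? ?]]. eauto.
  - destruct (H1 _ _ _ H0) as [x [? ?]]. eauto.
Qed.

Lemma bs_bisim_sym : forall I P Q, bs_bisim RS O barb I P Q -> bs_bisim RS O barb I Q P.
Proof.
  intros I P Q [R [[Hs HR] HPQ]]. exists R. split; [split|]; auto.
Qed.

Definition Rctx : term_rel RS := fun I P Q =>
  exists (J : Ob (rs_cat RS)) (g : Hom J I) (P0 Q0 : Hom (rs_zero RS) J),
    ipo_bisim RS J P0 Q0 /\ P = comp g P0 /\ Q = comp g Q0.

Lemma ipo_sub_bs :
  has_redex_IPOs RS ->
  (forall o : O, contextual_barb RS O barb o) ->
  all_labels_O_capturing RS O barb ->
  forall I P Q, ipo_bisim RS I P Q -> bs_bisim RS O barb I P Q.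
Proof.
  intros Hred Hctx Hcap I P Q H.
  exists Rctx. split.
  2:{ exists I, (idc I), P, Q. rewrite !comp_id_l. auto. }
  split.
  { intros I0 P0 Q0 [J [g [A [B [HAB [-> ->]]]]]].
    exists J, g, B, A. split; auto. apply ipo_bisim_sym; auto. }
  intros I0 P0 Q0 [J [g [A [B [HAB [-> ->]]]]]] J' C. split.
  - intros o Ho.
    rewrite <- comp_assoc. rewrite <- comp_assoc in Ho.
    apply (Hctx o J A B); auto.
    intros HA. destruct (Hcap o) as [Io [Jo [Co HC]]].
    apply HC in HA. destruct HA as [P' [E Ht]].
    apply HC. destruct E. simpl in Ht.
    destruct HAB as [R [HR HRAB]].
    destruct (proj1 (HR _ _ _ HRAB) _ _ _ Ht) as [Q' [HQ' _]].
    exists Q', eq_refl. exact HQ'.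
  - intros P' [K [l [r [d [Hrule [Hd [Heq ->]]]]]]].
    rewrite <- comp_assoc in Heq.
    destruct (Hred _ _ _ A (comp C g) l r d Hrule Hd Heq)
      as [I5 [e [f [g' [[Hc1 [Hc2 Hc3]] Hipo]]]]].
    subst d. destruct (rs_D_reflect _ _ _ _ _ _ Hd) as [Hg' Hf].
    assert (Ht : ipo_trans A e (comp f r)).
    { exists K, l, r, f. auto. }
    pose proof HAB as HAB'.
    destruct HAB as [R [HR HRAB]].
    destruct (proj1 (HR _ _ _ HRAB) _ _ _ Ht) as [Q' [HQ' HRQ']].
    destruct HQ' as [K' [l' [r' [d' [Hd' [Hrule' [-> [Hsq _]]]]]]]].
    exists (comp g' (comp d' r')). split.
    + exists K', l', r', (comp g' d'). repeat split; auto.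
      * apply rs_D_comp; auto.
      * rewrite <- comp_assoc, <- Hc2, comp_assoc, Hsq, comp_assoc. reflexivity.
      * rewrite comp_assoc. reflexivity.
    + exists I5, g', (comp f r), (comp d' r'). repeat split.
      * exists R. auto.
      * rewrite comp_assoc. reflexivity.
Qed.

Lemma bs_sub_ipo :
  (forall (I J : Ob (rs_cat RS)) (C : Hom I J),
      label_stable RS C (bs_bisim RS O barb)) ->
  forall I P Q, bs_bisim RS O barb I P Q -> ipo_bisim RS I P Q.
Proof.
  intros Hst I P Q H. exists (bs_bisim RS O barb). split; auto.
  intros I0 P0 Q0 HPQ. split.
  - intros J C P' Ht. exact (Hst _ _ C _ _ _ HPQ Ht).
  - intros J C Q' Ht.
    destruct (Hst _ _ C _ _ _ (bs_bisim_sym _ _ _ HPQ) Ht) as [P' [? ?]].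
    exists P'. split; auto. apply bs_bisim_sym; auto.
Qed.

End S.

Theorem mainTheorem3 (RS : ReactiveSystem) (O : Type)
  (barb : O -> forall I : Ob (rs_cat RS), Hom (rs_zero RS) I -> Prop) :
  has_redex_IPOs RS ->
  (forall o : O, contextual_barb RS O barb o) ->
  all_labels_O_capturing RS O barb ->
  (forall (I J : Ob (rs_cat RS)) (C : Hom I J),
      label_stable RS C (bs_bisim RS O barb)) ->
  forall (I : Ob (rs_cat RS)) (P Q : Hom (rs_zero RS) I),
    ipo_bisim RS I P Q <-> bs_bisim RS O barb I P Q.
Proof.
  intros H1 H2 H3 H4 I P Q. split.
  - apply ipo_sub_bs; auto.
  - apply bs_sub_ipo; auto.
Qed.
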